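(* Let $\mathbb{A}$ be a non-empty set, $C$ a finite semigroup and $\varphi:\mathbb{A}^+\to C$ a semigroup morphism. Then every $x\in\mathbb{A}^\omega$ has a suffix $x'$ which admits a $\varphi$-ultra monochromatic factorization.
   Context: $\mathbb{A}^+$ is the free semigroup of non-empty finite words over $\mathbb{A}$ (with concatenation); $\mathbb{A}^\omega$ is the set of right-infinite words over $\mathbb{A}$. A suffix of $x=x_0x_1\cdots$ is $x_nx_{n+1}\cdots$ for some $n\ge0$. A factorization $x'=V_0V_1V_2\cdots$ with all $V_i\in\mathbb{A}^+$ is $\varphi$-ultra monochromatic if there is $c\in C$ such that for all $k\ge1$, all $0\le n_1<n_2<\cdots<n_k$ and all permutations $\sigma$ of $\{1,\dots,k\}$, $\varphi(V_{n_{\sigma(1)}}V_{n_{\sigma(2)}}\cdots V_{n_{\sigma(k)}})=c$. *)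

(* Defs.v *)
From mathcomp Require Import all_boot.
Set Implicit Arguments. Unset Strict Implicit. Unset Printing Implicit Defensive.

(* Finite words are [seq A]; non-empty finite words (elements of A^+) are
   those of positive size.  Right-infinite words (A^omega) are [nat -> A]. *)

Definition semigroup_law (C : Type) (op : C -> C -> C) : Prop :=
  forall a b c, op a (op b c) = op (op a b) c.

(* [phi] is a semigroup morphism from A^+ (non-empty words, concatenation)
   to (C, op); only its values on non-empty words are relevant. *)
Definition semigroup_morphism (A C : Type) (op : C -> C -> C)
  (phi : seq A -> C) : Prop :=
  forall u v : seq A, 0 < size u -> 0 < size v ->
    phi (u ++ v) = op (phi u) (phi v).

Definition suffix_at (A : Type) (x : nat -> A) (n : nat) : nat -> A :=
  fun i => x (n + i).

Definition fact_pos (A : Type) (V : nat -> seq A) (k : nat) : nat :=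
  \sum_(j < k) size (V j).

Definition is_factorization (A : Type) (y : nat -> A) (V : nat -> seq A)
  : Prop :=
  (forall k, 0 < size (V k)) /\
  (forall k i (hi : i < size (V k)),
     y (fact_pos V k + i) = nth (y (fact_pos V k + i)) (V k) i).

Definition ultra_monochromatic (A C : Type) (phi : seq A -> C)
  (V : nat -> seq A) : Prop :=
  exists c : C, forall s : seq nat, 0 < size s -> sorted ltn s ->
    forall t : seq nat, perm_eq t s -> phi (flatten (map V t)) = c.

(* Main.v *)
From Stdlib Require Import Classical ClassicalEpsilon.
Require Import Defs.
From mathcomp Require Import all_boot.
From mathcomp Require Import zify.
Set Implicit Arguments.

Definition infP (P : nat -> Prop) := forall m, exists n, m <= n /\ P n.

Lemma bound_list (C : eqType) (Q : C -> nat -> Prop)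
  (mono : forall c m m', m <= m' -> Q c m -> Q c m') (l : seq C) :
  (forall c, exists m, Q c m) -> exists M, forall c, c \in l -> Q c M.
Proof.
move=> H; elim: l => [|a l [M HM]]; first by exists 0.
case: (H a) => m Hm; exists (maxn m M) => c; rewrite inE => /orP [/eqP->|hc].
  by apply: mono Hm; lia.
by apply: mono (HM c hc); lia.
Qed.

Lemma pigeon (C : finType) (P : nat -> Prop) (f : nat -> C) :
  infP P -> exists c, infP (fun n => P n /\ f n = c).
Proof.
move=> hP; apply: NNPP => H.
have H1 : forall c, exists m, forall n, m <= n -> ~ (P n /\ f n = c).
  move=> c; apply: NNPP => H2; apply: H; exists c => m; apply: NNPP => H3.
  apply: H2; exists m => n hn hPn; apply: H3; by exists n.
have [M HM] := @bound_list C (fun c M => forall n, M <= n -> ~ (P n /\ f n = c))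
  (fun c m m' hm H n hn => H n (leq_trans hm hn)) (enum C) H1.
case: (hP M) => n [hn Pn].
by apply: (HM (f n) (mem_enum _ _) n hn).
Qed.

Lemma stepex (C : finType) (col : nat -> nat -> C) (P : nat -> Prop) :
  exists a : nat, exists Q : nat -> Prop, infP P -> P a /\ infP Q /\
   (forall n, Q n -> P n /\ a < n) /\
   (forall n m, Q n -> Q m -> col a n = col a m).
Proof.
case: (classic (infP P)) => hP; last by exists 0, (fun _ => True) => /hP.
case: (hP 0) => a [_ Pa].
have infP' : infP (fun n => P n /\ a < n).
  move=> m; case: (hP (maxn m a.+1)) => n [hn Pn].
  exists n; split; first lia. split => //; lia.
case: (@pigeon _ _ (col a) infP') => c hc.
exists a, (fun n => (P n /\ a < n) /\ col a n = c) => _.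
split => //; split => //; split; first by move=> n [].
by move=> n m [_ ->] [_ ->].
Qed.

Lemma mono_succ (g : nat -> nat) : (forall i, g i < g i.+1) ->
  forall i j, i < j -> g i < g j.
Proof.
move=> gS i; elim => // j IH; rewrite ltnS leq_eqVlt => /orP [/eqP->|/IH h].
  exact: gS.
exact: ltn_trans h (gS j).
Qed.

Lemma ramsey (C : finType) (col : nat -> nat -> C) :
  exists h : nat -> nat, exists c, (forall i, h i < h i.+1) /\
    (forall i j, i < j -> col (h i) (h j) = c).
Proof.
have st : forall P, {aQ : nat * (nat -> Prop) | infP P -> P aQ.1 /\ infP aQ.2 /\
   (forall n, aQ.2 n -> P n /\ aQ.1 < n) /\
   (forall n m, aQ.2 n -> aQ.2 m -> col aQ.1 n = col aQ.1 m)}.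
  move=> P; apply: constructive_indefinite_description.
  case: (@stepex _ col P) => a [Q H]; by exists (a, Q).
pose Ps := fun k => iter k (fun P => (sval (st P)).2) (fun _ : nat => True).
pose a := fun k => (sval (st (Ps k))).1.
have infPs : forall k, infP (Ps k).
  elim => [|k IH]; first by move=> m; exists m.
  by case: (svalP (st (Ps k)) IH) => _ [H _].
have Hsub : forall k n, Ps k.+1 n -> Ps k n /\ a k < n.
  move=> k; by case: (svalP (st (Ps k)) (infPs k)) => _ [_ [H _]].
have Hcol : forall k n m, Ps k.+1 n -> Ps k.+1 m -> col (a k) n = col (a k) m.
  move=> k; by case: (svalP (st (Ps k)) (infPs k)) => _ [_ [_ H]].
have Hmem : forall k, Ps k (a k).
  move=> k; by case: (svalP (st (Ps k)) (infPs k)).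
have Hdesc : forall k d n, Ps (k + d) n -> Ps k n.
  move=> k; elim => [|d IH] n; first by rewrite addn0.
  by rewrite addnS => /Hsub [/IH].
have Hinc : forall k j, k < j -> a k < a j /\ col (a k) (a j) = col (a k) (a k.+1).
  move=> k j hkj; have e : j = k.+1 + (j - k.+1) by lia.
  have H : Ps k.+1 (a j) by apply: (Hdesc _ (j - k.+1)); rewrite -e.
  split; first by case: (Hsub _ _ H).
  by apply: Hcol => //; apply: Hmem.
case: (@pigeon _ (fun _ => True) (fun k => col (a k) (a k.+1))
  (fun m => ex_intro _ m (conj (leqnn m) I))) => c hc.
have nx : forall m, {n | m <= n /\ col (a n) (a n.+1) = c}.
  move=> m; apply: constructive_indefinite_description.
  case: (hc m) => n [hn [_ hd]]; by exists n.
pose g := fun i => iter i (fun m => sval (nx m.+1)) (sval (nx 0)).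
have gS : forall i, g i < g i.+1.
  move=> i; by case: (svalP (nx (g i).+1)).
have gd : forall i, col (a (g i)) (a (g i).+1) = c.
  by case => [|i]; [case: (svalP (nx 0)) | case: (svalP (nx (g i).+1))].
exists (fun i => a (g i)), c; split.
  move=> i; exact: (Hinc _ _ (gS i)).1.
move=> i j hij; have [_ ->] := Hinc _ _ (@mono_succ _ gS _ _ hij); exact: gd.
Qed.

Lemma seg_cat (A : Type) (x : nat -> A) i j k : i <= j -> j <= k ->
  mkseq (fun t => x (i + t)) (k - i) =
  mkseq (fun t => x (i + t)) (j - i) ++ mkseq (fun t => x (j + t)) (k - j).
Proof.
move=> hij hjk; case: (k - i =P 0) => [e|ne].
  have -> : j - i = 0 by lia. have -> : k - j = 0 by lia. by rewrite e.
apply: (@eq_from_nth _ (x i)); first by rewrite size_cat !size_mkseq; lia.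
move=> n; rewrite size_mkseq => hn; rewrite nth_cat size_mkseq.
case: ifP => h; first by rewrite !nth_mkseq.
rewrite !nth_mkseq; [f_equal; lia | lia | lia].
Qed.

Theorem proposition2p3 (A : Type) (hA : inhabited A) (C : finType)
  (op : C -> C -> C) (hC : semigroup_law op)
  (phi : seq A -> C) (hphi : semigroup_morphism op phi)
  (x : nat -> A) :
  exists n : nat, exists V : nat -> seq A,
    is_factorization (suffix_at x n) V /\ ultra_monochromatic phi V.
Proof.
case: (@ramsey _ (fun i j => phi (mkseq (fun t => x (i + t)) (j - i)))) => h [c [hinc hcol]].
have hmono := @mono_succ _ hinc.
have hle : forall i j, i <= j -> h i <= h j.
  move=> i j; rewrite leq_eqVlt => /orP [/eqP->//|/hmono]; exact: ltnW.
pose V := fun k => mkseq (fun t => x (h k + t)) (h k.+1 - h k).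
have phiV : forall k, phi (V k) = c by move=> k; exact: hcol.
have sV : forall k, 0 < size (V k) by move=> k; rewrite size_mkseq; have := hinc k; lia.
have idem : op c c = c.
  have := hcol 0 2 isT; rewrite (@seg_cat _ x (h 0) (h 1) (h 2)) ?hle //.
  by rewrite hphi ?size_mkseq; [rewrite (hcol 0 1) // (hcol 1 2) | have := hinc 0; lia | have := hinc 1; lia].
have fp : forall k, fact_pos V k = h k - h 0.
  rewrite /fact_pos; elim => [|k IH]; first by rewrite big_ord0 subnn.
  rewrite big_ord_recr /= IH size_mkseq; have := hinc k; have := hle 0 k isT; lia.
exists (h 0), V; split.
  split => // k i hi; rewrite fp nth_mkseq; last by rewrite size_mkseq in hi.
  rewrite /suffix_at; f_equal; have := hle 0 k isT; lia.
exists c => s hs _ t ht.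
have : 0 < size t by rewrite (perm_size ht).
elim: t {ht} => // k t IH _ /=.
case: t IH => [|k' t] IH; first by rewrite cats0 phiV.
rewrite hphi ?IH ?phiV ?idem //= size_cat; have := sV k'; lia.
Qed.
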